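(* A connected graph $G$ is well-bicovered with $b(G)=3$ if and only if $G$ is obtained by taking a complete graph $K_n$ with $n\ge 2$ and attaching a pendant edge (a new vertex adjacent only to that vertex) to one vertex of $K_n$.
   Context: All graphs are finite and simple; ''subgraph'' means induced subgraph. $b(G)$ denotes the maximum order of an induced bipartite subgraph of $G$. $G$ is well-bicovered if every vertex-inclusion-maximal induced bipartite subgraph of $G$ has the same order. *)

(* Defs.v *)
From mathcomp Require Import all_boot.
Set Implicit Arguments. Unset Strict Implicit. Unset Printing Implicit Defensive.

(* A finite simple graph: vertex type T : finType, adjacency e : rel T,
   assumed symmetric and irreflexive (hypotheses of the theorem). *)

Section Graphs.
Variables (T : finType) (e : rel T).

Definition induced_bipartite (S : {set T}) : bool :=
  [exists c : {ffun T -> bool},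
     [forall x in S, forall y in S, e x y ==> (c x != c y)]].

Definition maximal_bipartite (S : {set T}) : Prop :=
  induced_bipartite S /\
  forall S' : {set T}, S \subset S' -> induced_bipartite S' -> S' = S.

Definition bip_num : nat :=
  \max_(S : {set T} | induced_bipartite S) #|S|.

Definition well_bicovered : Prop :=
  forall S1 S2 : {set T}, maximal_bipartite S1 -> maximal_bipartite S2 ->
    #|S1| = #|S2|.

Definition connected_graph : Prop := forall x y : T, connect e x y.

End Graphs.

(* K_n with a pendant edge, on vertex set 'I_n.+1: vertices 0..n-1 form K_n,
   vertex n is pendant, adjacent only to vertex 0. *)
Definition Kn_pendant (n : nat) : rel 'I_n.+1 :=
  fun i j => (i != j) &&
    [|| (i < n) && (j < n),
        (i == n :> nat) && (j == 0 :> nat)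
      | (j == n :> nat) && (i == 0 :> nat)].

Arguments Kn_pendant n : clear implicits.

Definition isomorphic {T U : finType} (e : rel T) (f : rel U) : Prop :=
  exists phi : T -> U, bijective phi /\ forall x y, e x y = f (phi x) (phi y).

(* Main.v *)
Require Import Defs.
From mathcomp Require Import all_boot perm.
Set Implicit Arguments. Unset Strict Implicit. Unset Printing Implicit Defensive.


Section SA.
Variables (T : finType) (e : rel T).
Hypotheses (e_sym : symmetric e) (e_irr : irreflexive e).

Lemma bipP (S : {set T}) (c : T -> bool) :
  (forall x y, x \in S -> y \in S -> e x y -> c x != c y) -> induced_bipartite e S.
Proof.
move=> H; apply/existsP; exists [ffun x => c x].
apply/forallP => x; apply/implyP => xS; apply/forallP => y; apply/implyP => yS.
apply/implyP => exy; rewrite !ffunE; exact: H.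
Qed.

Lemma bipE (S : {set T}) : induced_bipartite e S ->
  exists c : T -> bool, forall x y, x \in S -> y \in S -> e x y -> c x != c y.
Proof.
case/existsP => c /forallP H; exists c => x y xS yS exy.
move/implyP: (H x) => /(_ xS) /forallP /(_ y) /implyP /(_ yS) /implyP; exact.
Qed.

Lemma no_triangle (S : {set T}) x y z : induced_bipartite e S ->
  x \in S -> y \in S -> z \in S -> e x y -> e y z -> e x z -> False.
Proof.
case/bipE => c H xS yS zS exy eyz exz.
move: (H _ _ xS yS exy) (H _ _ yS zS eyz) (H _ _ xS zS exz).
by case: (c x); case: (c y); case: (c z).
Qed.

Lemma bip_le (S : {set T}) : induced_bipartite e S -> #|S| <= bip_num e.
Proof. by move=> H; apply: (@leq_bigmax_cond _ (induced_bipartite e) (fun S => #|S|)). Qed.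

Lemma bip_num_le m : (forall S : {set T}, induced_bipartite e S -> #|S| <= m) -> bip_num e <= m.
Proof. by move=> H; apply/bigmax_leqP. Qed.

End SA.


Section SB.
Variables (T : finType) (e : rel T).
Hypotheses (e_sym : symmetric e) (e_irr : irreflexive e).
Variables (p u : T).
Hypotheses (pu : p != u) (ep : forall x, e p x = (x == u))
  (eK : forall x y, x != p -> y != p -> x != y -> e x y).

Lemma bipD (S : {set T}) : induced_bipartite e S = (#|S :\ p| <= 2).
Proof.
apply/idP/idP.
  move=> H; rewrite leqNgt; apply/negP => /card_gt2P [x [y [z [[xS yS zS] [xy yz zx]]]]].
  move: xS yS zS; rewrite !inE => /andP[xp xS] /andP[yp yS] /andP[zp zS].
  apply: (no_triangle H xS yS zS); apply: eK => //; by rewrite eq_sym.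
move=> Hc.
case: (boolP [exists w, (w \in S :\ p) && (w != u)]).
  case/existsP => w /andP[wS wu].
  apply: (bipP (c := fun v => (v == p) || (v == w))) => x y xS yS exy.
  apply/negP => /eqP cxy.
  have xy : x != y by apply/negP => /eqP xy; subst y; rewrite e_irr in exy.
  move: wS; rewrite !inE => /andP [wp wS'].
  case Hx: (x == p); case Hy: (y == p); rewrite Hx Hy /= in cxy.
  - by move/eqP: Hx => Hx; move/eqP: Hy => Hy; subst; rewrite eqxx in xy.
  - move/eqP: Hx => Hx; subst x; move: cxy => /esym /eqP cxy; subst y.
    by move: exy; rewrite ep (negbTE wu).
  - move/eqP: Hy => Hy; subst y; move/eqP: cxy => cxy; subst x.
    by move: exy; rewrite e_sym ep (negbTE wu).
  - case Hxw: (x == w); case Hyw: (y == w); rewrite Hxw Hyw in cxy => //.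
    + by move/eqP: Hxw => Hxw; move/eqP: Hyw => Hyw; subst; rewrite eqxx in xy.
    + move: Hc; rewrite leqNgt => /negP; apply; apply/card_gt2P.
      exists x, y, w; rewrite !inE Hx Hy wp xS yS wS' xy Hyw /= eq_sym Hxw; split => //.
move=> Hn.
apply: (bipP (c := fun v => v == p)) => x y xS yS exy.
have xy : x != y by apply/negP => /eqP xy; subst y; rewrite e_irr in exy.
apply/negP => /eqP cxy.
case Hx: (x == p); rewrite Hx in cxy.
  by move/eqP: Hx => Hx; move: cxy => /esym /eqP Hy; subst; rewrite eqxx in xy.
have xu : x == u.
  apply/negPn/negP => xu; move/negP: Hn; apply; apply/existsP; exists x.
  by rewrite !inE Hx xS xu.
have yu : y == u.
  apply/negPn/negP => yu; move/negP: Hn; apply; apply/existsP; exists y.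
  by rewrite !inE -cxy yS yu.
by move: xy; rewrite (eqP xu) (eqP yu) eqxx.
Qed.

Lemma max_not_ext (S : {set T}) z : maximal_bipartite e S -> z \notin S ->
  #|(z |: S) :\ p| <= 2 -> False.
Proof.
case=> _ HM zS Hc.
have := HM (z |: S) (subsetUr _ _); rewrite bipD Hc => /(_ isT) HS.
by move/negP: zS; apply; rewrite -HS setU11.
Qed.

Lemma max_card3 (S : {set T}) w : w != p -> w != u -> maximal_bipartite e S -> #|S| = 3.
Proof.
move=> wp wu HS.
have H2 : #|S :\ p| <= 2 by rewrite -bipD; case: HS.
case: (boolP (p \in S)) => pS.
  rewrite (cardsD1 p) pS.
  case: (ltngtP #|S :\ p| 2) => [lt2||->] //; last by move: H2; rewrite leqNgt => /negP.
  have [z [zS zp]] : exists z, z \notin S /\ z != p.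
    case: (boolP (u \in S)) => uS; last by exists u; rewrite eq_sym.
    case: (boolP (w \in S)) => wS; last by exists w.
    exfalso; move: lt2; rewrite ltnS leqNgt => /negP; apply; apply/card_gt1P.
    by exists u, w; rewrite !inE uS wS eq_sym pu wp eq_sym wu.
  exfalso; apply: (max_not_ext HS zS).
  apply: (leq_trans (n := #|z |: (S :\ p)|)).
    apply: subset_leq_card; apply/subsetP => x; rewrite !inE.
    by case/andP => -> /orP [->|->]; rewrite ?orbT.
  by rewrite cardsU1; case: (z \notin S :\ p); rewrite ?add1n ?add0n // ?ltnS // ltnW.
exfalso; apply: (max_not_ext HS pS).
apply: (leq_trans _ H2); apply: subset_leq_card; apply/subsetP => x; rewrite !inE.
by case/andP => xp /orP [xp'|->]; [rewrite (negbTE xp) in xp' | rewrite xp].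
Qed.

Lemma rev_dir w : w != p -> w != u -> well_bicovered e /\ bip_num e = 3.
Proof.
move=> wp wu; split.
  by move=> S1 S2 H1 H2; rewrite (max_card3 wp wu H1) (max_card3 wp wu H2).
apply/eqP; rewrite eqn_leq; apply/andP; split.
  apply: bip_num_le => S; rewrite bipD => H.
  by rewrite (cardsD1 p); case: (p \in S); rewrite ?add1n ?add0n // ltnW.
have -> : 3 = #|p |: (u |: [set w])|.
  rewrite !cardsU1 cards1 !inE.
  by rewrite (negbTE pu) (eq_sym p w) (negbTE wp) (eq_sym u w) wu.
apply: (@bip_le T e); rewrite bipD.
apply: (leq_trans (n := #|[set u; w]|)); last by rewrite cards2; case: (u != w).
apply: subset_leq_card; apply/subsetP => x; rewrite !inE.
by case/andP => /negbTE -> /=.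
Qed.
End SB.


Section SC.
Variables (T : finType) (e : rel T).
Hypotheses (e_sym : symmetric e) (e_irr : irreflexive e).

Lemma exists_out (A : {set T}) : #|A| < #|T| -> exists r, r \notin A.
Proof.
move=> H; apply/existsP; apply/negP => /existsP Hn.
have : [set: T] \subset A.
  apply/subsetP => x _; apply/negPn/negP => xA; apply: Hn; by exists x.
move/subset_leq_card; rewrite cardsT leqNgt H //.
Qed.

Lemma neighbor x y : connected_graph e -> x != y -> exists d, e x d.
Proof.
move=> conn xy; case/connectP: (conn x y) => q.
case: q => [_ /= yx|d q /= /andP[exd _] _]; last by exists d.
by rewrite yx eqxx in xy.
Qed.

Hypothesis conn : connected_graph e.
Hypothesis b3 : bip_num e = 3.

Lemma cardT3 : 3 <= #|T|.
Proof.
rewrite -b3; apply: bip_num_le => S _; exact: max_card.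
Qed.

Lemma four_bip (S : {set T}) : induced_bipartite e S -> #|S| <= 3.
Proof. by rewrite -b3; apply: bip_le. Qed.

Lemma F1 a b c d : a != b -> c != d -> ~~ e a b -> ~~ e c d ->
  [|| a == c, a == d, b == c | b == d].
Proof.
move=> ab cd nab ncd.
have nba : ~~ e b a by rewrite e_sym.
have ndc : ~~ e d c by rewrite e_sym.
apply/negPn/negP; rewrite !negb_or => /and4P [ac ad bc bd].
have ba : b != a by rewrite eq_sym.
have dc : d != c by rewrite eq_sym.
have ca : c != a by rewrite eq_sym.
have da : d != a by rewrite eq_sym.
have cb : c != b by rewrite eq_sym.
have db : d != b by rewrite eq_sym.
have : 4 <= 3.
  have -> : 4 = #|a |: (b |: (c |: [set d]))|.
    by rewrite !cardsU1 cards1 !inE (negbTE ab) (negbTE ac) (negbTE ad)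
      (negbTE bc) (negbTE bd) (negbTE cd).
  apply: four_bip.
  apply: (bipP (c := fun v => (v == a) || (v == b))) => x y.
  rewrite !inE => /or4P [] /eqP -> /or4P [] /eqP ->;
  by rewrite ?eqxx ?e_irr ?(negbTE nab) ?(negbTE nba) ?(negbTE ncd) ?(negbTE ndc)
     ?(negbTE ab) ?(negbTE ba) ?(negbTE cd) ?(negbTE dc) ?(negbTE ca) ?(negbTE da)
     ?(negbTE cb) ?(negbTE db).
by [].
Qed.

Lemma F2 a b c : a != b -> b != c -> c != a -> ~~ e a b -> ~~ e b c -> ~~ e c a -> False.
Proof.
move=> ab bc ca nab nbc nca.
case: (neighbor conn ab) => d ead.
have nba : ~~ e b a by rewrite e_sym.
have ncb : ~~ e c b by rewrite e_sym.
have nac : ~~ e a c by rewrite e_sym.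
have da : d != a by apply/negP => /eqP da; subst d; rewrite e_irr in ead.
have db : d != b by apply/negP => /eqP db; subst d; rewrite ead in nab.
have dc : d != c by apply/negP => /eqP dc; subst d; rewrite ead in nac.
have ba : b != a by rewrite eq_sym.
have cb : c != b by rewrite eq_sym.
have ac : a != c by rewrite eq_sym.
have ad : a != d by rewrite eq_sym.
have bd : b != d by rewrite eq_sym.
have cd : c != d by rewrite eq_sym.
have : 4 <= 3.
  have -> : 4 = #|a |: (b |: (c |: [set d]))|.
    by rewrite !cardsU1 cards1 !inE (negbTE ab) (negbTE ac) (negbTE ad)
      (negbTE bc) (negbTE bd) (negbTE cd).
  apply: four_bip.
  apply: (bipP (c := fun v => (v == d))) => x y.
  rewrite !inE => /or4P [] /eqP -> /or4P [] /eqP ->;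
  by rewrite ?eqxx ?e_irr ?(negbTE nab) ?(negbTE nba) ?(negbTE nbc) ?(negbTE ncb)
     ?(negbTE nca) ?(negbTE nac)
     ?(negbTE da) ?(negbTE db) ?(negbTE dc) ?(negbTE ad) ?(negbTE bd) ?(negbTE cd).
by [].
Qed.


Lemma nonedge : exists a b, a != b /\ ~~ e a b.
Proof.
case: (boolP [exists a, exists b, (a != b) && ~~ e a b]).
  by case/existsP => a /existsP [b /andP [ab nab]]; exists a, b.
move=> Hn; exfalso; move/negP: Hn => Hn.
have : bip_num e <= 2.
  apply: bip_num_le => S HS; rewrite leqNgt; apply/negP.
  case/card_gt2P => [x [y [z [[xS yS zS] [xy yz zx]]]]].
  have adj : forall a b, a != b -> e a b.
    move=> a b ab; apply/negPn/negP => nab; apply: Hn; apply/existsP; exists a.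
    by apply/existsP; exists b; rewrite ab nab.
  apply: (no_triangle HS xS yS zS); apply: adj => //; by rewrite eq_sym.
by rewrite b3.
Qed.

Hypothesis wb : well_bicovered e.

Lemma F3 x y : x != y -> (forall z, z != x -> e x z) -> (forall z, z != y -> e y z) -> False.
Proof.
move=> xy Ux Uy.
have [a [b [ab nab]]] := nonedge.
have [r] : exists r, r \notin [set a; b].
  apply: exists_out; apply: (leq_ltn_trans _ cardT3); rewrite cards2; by case: (a != b).
rewrite !inE negb_or => /andP [ra rb].
have M2 : maximal_bipartite e (a |: (b |: [set r])).
  have HB : induced_bipartite e (a |: (b |: [set r])).
    apply: (bipP (c := fun v => (v == r))) => x' y'.
    have ar : a != r by rewrite eq_sym.
    have br : b != r by rewrite eq_sym.
    have ba : b != a by rewrite eq_sym.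
    have nba : ~~ e b a by rewrite e_sym.
    rewrite !inE => /or3P [] /eqP -> /or3P [] /eqP ->;
    by rewrite ?eqxx ?e_irr ?(negbTE nab) ?(negbTE nba) ?(negbTE ar) ?(negbTE br).
  split => // S' sub HS'; apply/eqP; rewrite eq_sym eqEcard sub /=.
  apply: (leq_trans (four_bip HS')).
  by rewrite !cardsU1 cards1 !inE (negbTE ab) (eq_sym a r) (negbTE ra) (eq_sym b r) (negbTE rb).
have M1 : maximal_bipartite e [set x; y].
  have yx : y != x by rewrite eq_sym.
  split.
    apply: (bipP (c := fun v => (v == x))) => x' y'.
    rewrite !inE => /orP [] /eqP -> /orP [] /eqP ->;
    by rewrite ?eqxx ?e_irr ?(negbTE yx).
  move=> S' sub HS'; apply/eqP; rewrite eq_sym eqEsubset sub /=.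
  apply/subsetP => z zS; rewrite !inE; apply/negPn/negP; rewrite negb_or => /andP [zx zy].
  have xS : x \in S' by apply: (subsetP sub); rewrite !inE eqxx.
  have yS : y \in S' by apply: (subsetP sub); rewrite !inE eqxx orbT.
  apply: (no_triangle HS' xS yS zS); [exact: Ux | exact: Uy | exact: Ux].
have := wb M1 M2.
rewrite cards2 xy !cardsU1 cards1 !inE (negbTE ab) (eq_sym a r) (negbTE ra) (eq_sym b r) (negbTE rb).
by [].
Qed.

Lemma center : exists p, forall x y, x != y -> ~~ e x y -> (x == p) || (y == p).
Proof.
have [p [q [pq npq]]] := nonedge.
have qp : q != p by rewrite eq_sym.
case: (boolP [exists s, [&& s != p, s != q & ~~ e p s]]).
  case/existsP => s /and3P [sp sq nps].
  exists p => x y xy nxy; apply/negPn/negP; rewrite negb_or => /andP [xp yp].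
  have H1 := F1 xy pq nxy npq; rewrite (negbTE xp) (negbTE yp) /= in H1.
  have ps : p != s by rewrite eq_sym.
  have H2 := F1 xy ps nxy nps; rewrite (negbTE xp) (negbTE yp) /= in H2.
  have nqs : ~~ e q s.
    case/orP: H1 => /eqP ?; subst; case/orP: H2 => /eqP ?; subst;
    by rewrite ?eqxx in sq *; rewrite // e_sym.
  have nsp : ~~ e s p by rewrite e_sym.
  by apply: (F2 pq _ sp npq nqs nsp); rewrite eq_sym.
move=> Hn; exists q => x y xy nxy; apply/negPn/negP; rewrite negb_or => /andP [xq yq].
have H1 := F1 xy pq nxy npq; rewrite (negbTE xq) (negbTE yq) /= orbF in H1.
case/orP: H1 => /eqP ?; subst.
  move/negP: Hn; apply; apply/existsP; exists y; by rewrite eq_sym xy yq nxy.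
move/negP: Hn; apply; apply/existsP; exists x; by rewrite xy xq /= e_sym nxy.
Qed.


Lemma fwd_struct : exists p u w, [/\ p != u, (forall x, e p x = (x == u)),
  (forall x y, x != p -> y != p -> x != y -> e x y), w != p & w != u].
Proof.
have [p Hp] := center.
have eK : forall x y, x != p -> y != p -> x != y -> e x y.
  move=> x y xp yp xy; apply/negPn/negP => nxy.
  by move: (Hp x y xy nxy); rewrite (negbTE xp) (negbTE yp).
have [q qp] : exists q, q != p.
  have [r] : exists r, r \notin [set p].
    by apply: exists_out; rewrite cards1; apply: leq_trans cardT3.
  by rewrite inE => ?; exists r.
have pq : p != q by rewrite eq_sym.
have [u epu] := neighbor conn pq.
have univ : forall v, e p v -> forall z, z != v -> e v z.
  move=> v epv z zv; case: (boolP (z == p)) => [/eqP -> | zp]; first by rewrite e_sym.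
  have vp : v != p by apply/negP => /eqP vp; subst v; rewrite e_irr in epv.
  by apply: eK; rewrite // eq_sym.
have pu : p != u by apply/negP => /eqP pu; subst u; rewrite e_irr in epu.
have ep : forall x, e p x = (x == u).
  move=> x; case: (boolP (x == u)) => [/eqP -> // | xu].
  apply/negP => epx; apply: (F3 xu (univ x epx) (univ u epu)).
have [w] : exists w, w \notin [set p; u].
  apply: exists_out; apply: (leq_ltn_trans _ cardT3); rewrite cards2; by case: (p != u).
rewrite !inE negb_or => /andP [wp wu].
by exists p, u, w; split.
Qed.

End SC.


Lemma K_max n (i : 'I_n.+1) : 0 < n -> Kn_pendant n ord_max i = (val i == 0).
Proof.
move=> n0; rewrite /Kn_pendant /= ltnn eqxx /=.
case: (boolP (val i == 0)) => [/eqP i0|i0].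
  rewrite andbT; apply/negP => /eqP/(congr1 (@nat_of_ord _)) /=; rewrite i0 => n0'.
  by rewrite n0' in n0.
by move: n0; rewrite lt0n => /negbTE ->; rewrite !andbF.
Qed.

Lemma K_sym n : symmetric (Kn_pendant n).
Proof.
move=> i j; rewrite /Kn_pendant eq_sym; congr (_ && _).
by rewrite andbC; case: (_ && _); case: (_ && _); case: (_ && _).
Qed.

Lemma K_lt n (i j : 'I_n.+1) : i < n -> j < n -> Kn_pendant n i j = (i != j).
Proof. by move=> hi hj; rewrite /Kn_pendant hi hj /= andbT. Qed.

Section SD.
Variables (T : finType) (e : rel T).
Hypotheses (e_sym : symmetric e) (e_irr : irreflexive e).

Lemma iso_struct n : 2 <= n -> isomorphic e (Kn_pendant n) ->
  exists p u w, [/\ p != u, (forall x, e p x = (x == u)),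
  (forall x y, x != p -> y != p -> x != y -> e x y), w != p & w != u].
Proof.
move=> n2 [phi [[psi phiK psiK] He]].
have n0 : 0 < n by apply: leq_trans n2.
have phiE : forall x y, (x == y) = (phi x == phi y).
  move=> x y; apply/eqP/eqP => [->//|]; exact: (can_inj phiK).
pose p := psi ord_max; pose u := psi ord0; pose w := psi (inord 1).
have vw : nat_of_ord (phi w) = 1 by rewrite /w psiK inordK // ltnS; apply: leq_trans n2.
exists p, u, w; split.
- rewrite phiE /p /u !psiK; apply/negP => /eqP/(congr1 (@nat_of_ord _)) /= n00.
  by rewrite n00 in n0.
- by move=> x; rewrite He /p psiK K_max // phiE /u psiK.
- move=> x y xp yp xy; rewrite He K_lt -?phiE //.
    by rewrite ltn_neqAle -ltnS ltn_ord andbT; move: xp; rewrite phiE /p psiK.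
  by rewrite ltn_neqAle -ltnS ltn_ord andbT; move: yp; rewrite phiE /p psiK.
- rewrite phiE /p psiK; apply/negP => /eqP/(congr1 (@nat_of_ord _)); rewrite vw /= => n1.
  by rewrite -n1 in n2.
- by rewrite phiE /u psiK; apply/negP => /eqP/(congr1 (@nat_of_ord _)); rewrite vw.
Qed.


Lemma struct_iso p u w : p != u -> (forall x, e p x = (x == u)) ->
  (forall x y, x != p -> y != p -> x != y -> e x y) -> w != p -> w != u ->
  exists n, 2 <= n /\ isomorphic e (Kn_pendant n).
Proof.
move=> pu ep eK wp wu.
have cT : 2 < #|T|.
  apply/card_gt2P; exists p, u, w; split => //; split => //; by rewrite eq_sym.
pose n := #|T|.-1.
have hN : #|T| = n.+1 by rewrite /n prednK //; apply: leq_trans cT.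
pose f0 x := cast_ord hN (enum_rank x).
pose t1 := tperm (f0 p) ord_max.
pose t2 := tperm ord0 (t1 (f0 u)).
pose phi x := t2 (t1 (f0 x)).
have phi_inj : injective phi.
  by move=> x y /perm_inj /perm_inj /cast_ord_inj /enum_rank_inj.
have phiE : forall x y, (x == y) = (phi x == phi y).
  by move=> x y; apply/eqP/eqP => [->//|]; apply: phi_inj.
have n0 : 0 < n by rewrite /n -ltnS -hN; apply: leq_trans cT.
have phip : phi p = ord_max.
  rewrite /phi /t1 tpermL /t2 tpermD //.
    by apply/negP => /eqP/(congr1 (@nat_of_ord _)) /= n00; rewrite -n00 in n0.
  apply/negP => /eqP h; have : t1 (f0 u) = t1 (f0 p) by rewrite h /t1 tpermL.
  by move/perm_inj/cast_ord_inj/enum_rank_inj => up; rewrite up eqxx in pu.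
have phiu : phi u = ord0 by rewrite /phi /t2 tpermR.
have ltp : forall x, x != p -> phi x < n.
  move=> x xp; rewrite ltn_neqAle -ltnS ltn_ord andbT.
  apply/negP => /eqP hx; move: xp; rewrite phiE phip.
  by apply/negP/negPn; apply/eqP/val_inj.
have epx : forall y, e p y = Kn_pendant n (phi p) (phi y).
  move=> y; rewrite phip K_max // ep phiE phiu; apply/eqP/eqP => [->//|h].
  by apply: val_inj.
exists n; split; first by rewrite /n -ltnS -hN.
exists phi; split.
  by apply: inj_card_bij => //; rewrite card_ord hN.
move=> x y.
case: (boolP (x == p)) => [/eqP -> | xp]; first exact: epx.
case: (boolP (y == p)) => [/eqP -> | yp]; first by rewrite e_sym K_sym; exact: epx.
rewrite K_lt ?ltp // -phiE.
case: (boolP (x == y)) => [/eqP -> | xy]; first by rewrite e_irr.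
exact: eK.
Qed.

End SD.

Theorem mainTheorem8 (T : finType) (e : rel T)
  (e_sym : symmetric e) (e_irr : irreflexive e) :
  connected_graph e ->
  ((well_bicovered e /\ bip_num e = 3) <->
   exists n : nat, 2 <= n /\ isomorphic e (Kn_pendant n)).
Proof.
move=> conn; split.
  case=> wb b3.
  have [p [u [w [pu ep eK wp wu]]]] := fwd_struct e_sym e_irr conn b3 wb.
  exact: (struct_iso e_sym e_irr pu ep eK wp wu).
case=> n [n2 iso].
have [p [u [w [pu ep eK wp wu]]]] := iso_struct n2 iso.
exact: (rev_dir e_sym e_irr pu ep eK wp wu).
Qed.
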